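(* Let $n\ge1$, $r\ge1$ and $\underline{m}=(m_0,\dots,m_n)$ positive integers. For each $i\in\{0,\dots,n\}$ and each $k\in S_i$ there is a path from $v_0^0$ to $v_i^k$ in the graph $\overline{L}_{2n+1}^{r;\underline{m}}$.
   Context: A path in a directed graph is a finite nonempty sequence $e_1\cdots e_k$ of edges with $r(e_i)=s(e_{i+1})$, from $s(e_1)$ to $r(e_k)$. $\Lambda=L_{2n+1}\times_c\mathbb{Z}_r$ is the graph with vertices $(v_i,k)$, $0\le i\le n$, $k\in\mathbb{Z}_r$, and edges $(e_{ij},k)$, $0\le i\le j\le n$, $k\in\mathbb{Z}_r$, with source $(v_i,k-m_i\bmod r)$ and range $(v_j,k)$. A path from $(v_i,s)$ to $(v_j,t)$ is admissible if none of the vertices it passes through other than its source and range lies in $\{(v_\ell,k): i\le\ell\le j,\ 0\le k\le\gcd(m_\ell,r)-1\}$; $n_{ij}^{st}$ is the number of such paths. $H$ is the smallest hereditary subset of $\Lambda^0$ (closed under following paths) containing all $(v_i,0)$, and $S_i=\{k\in\{0,\dots,\gcd(m_i,r)-1\}:(v_i,k)\in H\}$. The graph $\overline{L}_{2n+1}^{r;\underline{m}}$ has vertices $v_i^k$ ($k\in S_i$) and edges $e_{ij;a}^{st}$ ($0\le i\le j\le n$, $s\in S_i$, $t\in S_j$, $1\le a\le n_{ij}^{st}$) from $v_i^s$ to $v_j^t$. *)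

(* Defs.v *)
From mathcomp Require Import all_boot.
From Stdlib Require Import ClassicalEpsilon.

Set Implicit Arguments.
Unset Strict Implicit.
Unset Printing Implicit Defensive.

(* Vertices (v_i, k) of Lambda = L_{2n+1} x_c Z_r are encoded as pairs (i, k)
   with i <= n and k < r (Z_r represented by {0,..,r-1}). *)
Definition vtx := (nat * nat)%type.

(* Edges (e_{ij}, k) of Lambda are encoded as triples (i, j, k). *)
Definition Ledge := (nat * nat * nat)%type.

Definition L_valid (n r : nat) (e : Ledge) : Prop :=
  let '(i, j, k) := e in (i <= j <= n) && (k < r).

(* source of (e_{ij},k) is (v_i, k - m_i mod r) *)
Definition L_src (r : nat) (m : nat -> nat) (e : Ledge) : vtx :=
  let '(i, j, k) := e in (i, (k + r - m i %% r) %% r).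

Definition L_rng (e : Ledge) : vtx :=
  let '(i, j, k) := e in (j, k).

Definition is_path {E V : Type} (valid : E -> Prop) (src rng : E -> V)
    (u w : V) (p : seq E) : Prop :=
  match p with
  | [::] => False
  | e0 :: _ =>
      src e0 = u /\ rng (last e0 p) = w /\
      (forall l, l < size p -> valid (nth e0 p l)) /\
      (forall l, l.+1 < size p -> rng (nth e0 p l) = src (nth e0 p l.+1))
  end.

Definition admissible (n r : nat) (m : nat -> nat) (i j s t : nat)
    (p : seq Ledge) : Prop :=
  is_path (L_valid n r) (L_src r m) L_rng (i, s) (j, t) p /\
  (forall l, l.+1 < size p ->
     let v := L_rng (nth (0, 0, 0) p l) in
     ~~ ((i <= v.1 <= j) && (v.2 < gcdn (m v.1) r))).

(* n_{ij}^{st} : the number of admissible paths, i.e. the (unique) N such that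
   the admissible paths can be listed without repetition in a list of length N. *)
Definition nadm (n r : nat) (m : nat -> nat) (i j s t : nat) : nat :=
  epsilon (inhabits 0)
    (fun N => exists L : seq (seq Ledge),
        uniq L /\ (forall p, p \in L <-> admissible n r m i j s t p) /\
        size L = N).

Definition hereditary (n r : nat) (m : nat -> nat) (X : vtx -> Prop) : Prop :=
  forall e, L_valid n r e -> X (L_src r m e) -> X (L_rng e).

Definition inH (n r : nat) (m : nat -> nat) (v : vtx) : Prop :=
  forall X : vtx -> Prop, hereditary n r m X ->
    (forall i, i <= n -> X (i, 0)) -> X v.

Definition inS (n r : nat) (m : nat -> nat) (i k : nat) : Prop :=
  k < gcdn (m i) r /\ inH n r m (i, k).

(* The graph \bar L_{2n+1}^{r;m}: vertices v_i^k (i <= n, k in S_i),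
   edges e_{ij;a}^{st} encoded as (i, j, s, t, a) with i <= j <= n,
   s in S_i, t in S_j, 1 <= a <= n_{ij}^{st}; from v_i^s to v_j^t. *)
Definition Bedge := (nat * nat * nat * nat * nat)%type.

Definition B_valid (n r : nat) (m : nat -> nat) (e : Bedge) : Prop :=
  let '(i, j, s, t, a) := e in
  (i <= j <= n) /\ inS n r m i s /\ inS n r m j t /\
  (1 <= a <= nadm n r m i j s t).

Definition B_src (e : Bedge) : vtx := let '(i, j, s, t, a) := e in (i, s).
Definition B_rng (e : Bedge) : vtx := let '(i, j, s, t, a) := e in (j, t).

(* Main.v *)
From Stdlib Require Import ClassicalEpsilon.
Require Import Defs.
From mathcomp Require Import all_boot zify.
Set Implicit Arguments. Unset Strict Implicit. Unset Printing Implicit Defensive.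
Section GP.
Variables (E V : Type) (valid : E -> Prop) (src rng : E -> V).

Fixpoint chainP (u : V) (p : seq E) (w : V) : Prop :=
  match p with
  | [::] => False
  | e :: p' => valid e /\ src e = u /\
      match p' with [::] => rng e = w | _ => chainP (rng e) p' w end
  end.

Lemma is_pathE u w p : is_path valid src rng u w p <-> chainP u p w.
Proof.
elim: p u => [|e p IH] u //=.
case: p IH => [|e' p] IH.
  split.
    by case=> -> [-> [hv _]]; split => //; exact: (hv 0).
  by case=> hv [-> ->]; split => //; split => //; split => // -[].
rewrite -IH /=.
split.
  case=> hs [hl [hv hc]]; split; first by apply: (hv 0).
  split => //; split; first by rewrite (hc 0).
  split => //; split.
    move=> l hl'; have := hv l.+1 hl' => /=.
    by rewrite (set_nth_default e' e).
  move=> l hl'; have := hc l.+1 hl' => /=.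
  rewrite (set_nth_default e' e) ?(set_nth_default e' e (s:=p)) //=; lia.
case=> hv [hs [hs' [hl [hv' hc']]]].
split => //; split => //; split.
  case=> [|l] hl' //=.
  by rewrite (set_nth_default e' e) //; apply: hv'.
case=> [|l] hl' /=; first by rewrite hs'.
rewrite (set_nth_default e' e) 1?(set_nth_default e' e (n:=l)); last 2 first.
  by move: hl' => /=; lia.
  by move: hl' => /=; lia.
by apply: hc'.
Qed.

Lemma chain_cat u v w p q : chainP u p v -> chainP v q w -> chainP u (p ++ q) w.
Proof.
elim: p u => [|e p IH] u //= [hv [hs hp]] hq; split => //; split => //.
case: p hp IH => [|e' p] hp IH /=.
  by clear IH; case: q hq => // e'' q; rewrite hp.
exact: IH.
Qed.

Lemma chain_single e u w : valid e -> src e = u -> rng e = w -> chainP u [:: e] w.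
Proof. by move=> *; do !split. Qed.

End GP.
Lemma modK2 r mm k : 0 < r -> k < r -> ((k + r - mm %% r) %% r + mm) %% r = k.
Proof.
move=> hr hk.
have hlt : mm %% r < r by rewrite ltn_pmod.
rewrite modnDml -modnDmr subnK; last by lia.
by rewrite modnDr modn_small.
Qed.

Lemma modK r mm b : 0 < r -> ((b + mm) %% r + r - mm %% r) %% r = b %% r.
Proof.
move=> hr.
have hlt : mm %% r < r by rewrite ltn_pmod.
apply/eqP; rewrite -(eqn_modDr mm) -modnDmr.
by rewrite subnK ?modnDr ?modn_mod //; lia.
Qed.

Lemma chain_last (E V : Type) (valid : E -> Prop) (src rng : E -> V) u p w x0 :
  chainP valid src rng u p w -> rng (nth x0 p (size p).-1) = w.
Proof.
elim: p u => [|e p IH] u //= [_ [_ hp]].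
case: p hp IH => [|e' p] hp IH //=.
exact: (IH _ hp).
Qed.

Section Main.
Variables (n r : nat) (m : nat -> nat).
Hypothesis hr : 0 < r.

Definition g l := gcdn (m l) r.
Definition rep (v : vtx) := v.2 < g v.1.
Definition LP u p w := chainP (L_valid n r) (L_src r m) L_rng u p w.
Definition clean (p : seq Ledge) := forall l, l.+1 < size p -> ~~ rep (L_rng (nth (0,0,0) p l)).
Definition BP v := exists q, chainP (B_valid n r m) B_src B_rng (0,0) q v.
Definition G w := [/\ rep w, inH n r m w, w.1 <= n & (w = (0,0) \/ BP w)].
Definition Y v := inH n r m v /\ exists w p, [/\ G w, LP w p v & clean p].

Lemma inH_step e : L_valid n r e -> inH n r m (L_src r m e) -> inH n r m (L_rng e).
Proof. by move=> he hs X hX hb; apply: (hX e he); apply: hs. Qed.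

Lemma edge_mono e : L_valid n r e -> (L_src r m e).1 <= (L_rng e).1.
Proof. by case: e => [[a b] k] /= /andP [/andP [h _] _]. Qed.

Lemma edge_le e : L_valid n r e -> (L_rng e).1 <= n /\ (L_rng e).2 < r /\ (L_src r m e).1 <= n.
Proof. case: e => [[a b] k] /= /andP [/andP [h1 h2] h3]; do !split => //; lia. Qed.

Lemma LP_mono u p w : LP u p w -> u.1 <= w.1.
Proof.
rewrite /LP; elim: p u => [|e p IH] u //= [hv [hs hp]].
have := edge_mono hv; rewrite hs => h.
case: p hp IH => [|e' p] hp IH; first by rewrite -hp.
exact: (leq_trans h (IH _ hp)).
Qed.

Definition W := r * r + r + 1.
Definition Pd l x := fun c => (0 < c) && ((x + c * m l) %% r < g l).
Definition dd l x := find (Pd l x) (iota 0 W).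

Lemma g_gt0 l : 0 < g l.
Proof. by rewrite /g gcdn_gt0 hr orbT. Qed.

Lemma g_le l : g l <= r.
Proof. by apply: dvdn_leq => //; apply: dvdn_gcdr. Qed.

Lemma dd_ex l x : x < r -> exists c, c < W /\ Pd l x c.
Proof.
move=> hx.
have [a ha hdiv] := Bezoutl (m l) hr.
rewrite gcdnC -/(g l) in hdiv.
have [K hK] := dvdnP hdiv.
set gg := g l in hK *.
have hg := g_gt0 l; have hgr := g_le l.
set q := x %/ gg.
have hx2 := divn_eq x gg.
have hq : q <= x by apply: leq_div.
have hxg : x %% gg < gg by apply: ltn_pmod.
exists (a * q + r); split.
  have : a * q < r * r by apply: ltn_mul => //; lia.
  rewrite /W; lia.
apply/andP; split; first by lia.
have -> : x + (a * q + r) * m l = x %% gg + (q * K + m l) * r.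
  rewrite -/q in hx2.
  nia.
rewrite addnC modnMDl modn_small //; lia.
Qed.

Lemma dd_spec l x : x < r -> dd l x < W /\ Pd l x (dd l x).
Proof.
move=> hx.
have [c [hc hP]] := dd_ex l hx.
have hh : has (Pd l x) (iota 0 W).
  by apply/hasP; exists c => //; rewrite mem_iota.
have hlt : dd l x < W by move: (hh); rewrite has_find size_iota.
split => //.
by have := nth_find 0 hh; rewrite nth_iota // add0n.
Qed.

Lemma dd_min l x c : c < W -> Pd l x c -> dd l x <= c.
Proof.
move=> hc hP; rewrite leqNgt; apply/negP => h.
by have := before_find 0 h; rewrite nth_iota // add0n hP.
Qed.

Definition Phi (v : vtx) := (n - v.1) * W + dd v.1 v.2.

Definition Lmax := n.+1 * W + 2.

Lemma adm_bound i j s t p : admissible n r m i j s t p -> size p <= Lmax.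
Proof.
case=> hpath hadm.
case: p hpath hadm => [//|e0 p'] hpath hadm.
set p := e0 :: p' in hpath hadm *.
case: hpath => hs [hl [hv hc]].
pose f l := nth (0, 0, 0) p l.
have hv' : forall l, l < size p -> L_valid n r (f l).
  by move=> l hl'; rewrite /f (set_nth_default e0) //; apply: hv.
have hc' : forall l, l.+1 < size p -> L_rng (f l) = L_src r m (f l.+1).
  move=> l hl'; rewrite /f (set_nth_default e0) 1?(set_nth_default e0 _ hl') //; last by lia.
  exact: hc.
have hs' : L_src r m (f 0) = (i, s) by [].
have hl' : L_rng (f (size p).-1) = (j, t).
  by rewrite /f (set_nth_default e0) // nth_last.
have lo : forall l, l < size p -> i <= (L_rng (f l)).1.
  elim=> [|l IH] hl2.
    by have := edge_mono (hv' 0 hl2); rewrite hs'.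
  have := edge_mono (hv' _ hl2); rewrite -hc' //.
  have := IH (ltnW hl2); lia.
have hi : forall d l, l + d = (size p).-1 -> (L_rng (f l)).1 <= j.
  elim=> [|d IH] l hld.
    by rewrite addn0 in hld; rewrite hld hl'.
  have hl2 : l.+1 < size p by move: hld => /=; lia.
  have := edge_mono (hv' _ hl2); rewrite -hc' //.
  have hh2 : l.+1 + d = (size p).-1 by rewrite addSnnS.
  have := IH l.+1 hh2; lia.
have nr : forall l, l.+1 < size p -> ~~ rep (L_rng (f l)).
  move=> l hl2; have := hadm l hl2 => /=.
  have h1 := lo l (ltnW hl2).
  have hh3 : l + ((size p).-1 - l) = (size p).-1 by move: hl2 => /=; lia.
  have h2 := hi ((size p).-1 - l) l hh3.
  rewrite /rep /g -/(f l); case: (L_rng (f l)) h1 h2 => x y /= -> ->.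
  by [].
have dec : forall l, l.+2 < size p -> Phi (L_rng (f l.+1)) < Phi (L_rng (f l)).
  move=> l hl2.
  have nr1 := nr l.+1 hl2.
  have hv1 := hv' l.+1 (ltnW hl2).
  rewrite (hc' l (ltnW hl2)).
  case: (f l.+1) hv1 nr1 => [[a b] k] /= /andP [/andP [hab hbn] hk] nr1.
  rewrite /Phi /=.
  have [hlt|heq] := ltnP a b.
    have [h1 _] := dd_spec b hk.
    have h3 : (n - b).+1 * W <= (n - a) * W by apply: leq_mul => //; lia.
    rewrite mulSn in h3; lia.
  have eab : a = b by lia.
  subst b.
  set xx := (k + r - m a %% r) %% r.
  have hxx : xx < r by apply: ltn_pmod.
  have [hD hP] := dd_spec a hxx.
  set D := dd a xx in hD hP *.
  case/andP: hP => hD0 hP.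
  have key : (k + D.-1 * m a) %% r = (xx + D * m a) %% r.
    have -> : xx + D * m a = (xx + m a) + D.-1 * m a.
      by rewrite -{1}(prednK hD0) mulSn; lia.
    by rewrite -[in RHS]modnDml modK2.
  have hD1 : D != 1.
    apply/eqP => hD1; move: nr1; rewrite /rep /= -(modn_small hk).
    by rewrite -(addn0 k) -[X in k + X](mul0n (m a)) -[0]/(1.-1) -hD1 key hP.
  have hW : D.-1 < W by lia.
  have := dd_min (x := k) (l := a) (c := D.-1) hW.
  rewrite /Pd key hP andbT => h.
  have hD2 : 0 < D.-1 by lia.
  have := h hD2; lia.
have acc : forall l, l.+1 < size p -> Phi (L_rng (f l)) + l <= Phi (L_rng (f 0)).
  elim=> [|l IH] hl2; first by rewrite addn0.
  have := dec l hl2; have := IH (ltnW hl2); lia.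
have pos : forall l, l < size p -> 0 < Phi (L_rng (f l)).
  move=> l hl2; have := hv' l hl2; case: (f l) => [[a b] k] /= /andP [_ hk].
  have [_ /andP [h _]] := dd_spec b hk; by rewrite /Phi /= addn_gt0 h orbT.
have top : Phi (L_rng (f 0)) <= n.+1 * W.
  rewrite /Phi.
  case: (L_rng (f 0)) (edge_le (hv' 0 erefl)) => bb kk /= [_ [hkk _]].
  have [hq _] := dd_spec bb hkk.
  have : (n - bb) * W <= n * W by apply: leq_mul => //; apply: leq_subr.
  rewrite mulSn; lia.
have [hs1|hs1] := leqP (size p) 1; first by rewrite /Lmax; lia.
have hh4 : (size p).-2.+1 < size p by lia.
have h1 := acc (size p).-2 hh4.
have h2 := pos (size p).-2 (ltnW hh4).
rewrite /Lmax; lia.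
Qed.

Definition Eall : seq Ledge :=
  [seq (ab, k) | ab <- [seq (a, b) | a <- iota 0 n.+1, b <- iota 0 n.+1], k <- iota 0 r].

Fixpoint words k : seq (seq Ledge) :=
  if k is k'.+1 then [seq e :: w | e <- Eall, w <- words k'] else [:: [::]].

Lemma valid_in e : L_valid n r e -> e \in Eall.
Proof.
case: e => [[a b] k] /= /andP [/andP [hab hbn] hk].
apply: (allpairs_f (fun ab k => (ab, k))); last by rewrite mem_iota.
by apply: (allpairs_f (fun a b => (a, b))); rewrite mem_iota; lia.
Qed.

Lemma words_in w : all (mem Eall) w -> w \in words (size w).
Proof.
elim: w => [|e w IH] //= /andP [he hw].
by apply: (allpairs_f (fun e w => e :: w)) => //; apply: IH.
Qed.

Lemma adm_nadm i j s t p : admissible n r m i j s t p -> 0 < nadm n r m i j s t.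
Proof.
move=> hp.
pose U := flatten [seq words k | k <- iota 0 Lmax.+1].
pose L := undup [seq q <- U | if excluded_middle_informative (admissible n r m i j s t q) then true else false].
have hU : forall q, admissible n r m i j s t q -> q \in U.
  move=> q hq; apply/flatten_mapP; exists (size q).
    by rewrite mem_iota add0n ltnS; apply: (adm_bound hq).
  apply: words_in; apply/allP => e he.
  case: hq => hpath _; case: q hpath he => [//|e0 q] [_ [_ [hv _]]] he.
  have [l hl <-] := nthP e0 he.
  exact: valid_in (hv l hl).
have ex : exists N, exists L0 : seq (seq Ledge),
    uniq L0 /\ (forall q, q \in L0 <-> admissible n r m i j s t q) /\ size L0 = N.
  exists (size L), L; split; first exact: undup_uniq.
  split => // q; rewrite mem_undup mem_filter.
  case: excluded_middle_informative => [h|h] /=; split => // h'.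
    exact: hU.
have := epsilon_spec (inhabits 0) _ ex.
rewrite /nadm; case=> L' [_ [hmem <-]].
have : p \in L' by apply/hmem.
by case: L' hmem.
Qed.

Lemma norm v : Y v -> rep v -> v.1 <= n -> BP v.
Proof.
case=> hHv [w [p [[hrw hHw hwn hBw] hp hcl]]] hrv hvn.
case: w hrw hHw hwn hBw hp => a s hrw hHw hwn hBw hp.
case: v hHv hrv hvn hp => j t hHv hrv hvn hp.
have hadm : admissible n r m a j s t p.
  split; first by rewrite is_pathE.
  move=> l hl /=; have := hcl l hl; rewrite /rep.
  by case: (L_rng _) => x y /= /negbTE ->; rewrite andbF.
have hb : B_valid n r m (a, j, s, t, 1).
  rewrite /B_valid; split; first by rewrite hvn (LP_mono hp).
  by do !split => //; apply: adm_nadm hadm.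
case: hBw => [[ha hs']|[q hq]]; first subst a s.
  by exists [:: (0, j, 0, t, 1)]; apply: chain_single.
exists (q ++ [:: (a, j, s, t, 1)]); apply: chain_cat hq _.
exact: chain_single.
Qed.

Lemma stepY e : L_valid n r e -> G (L_src r m e) \/ Y (L_src r m e) -> Y (L_rng e).
Proof.
move=> he.
have hG : G (L_src r m e) -> Y (L_rng e).
  case=> hr1 hH hn1 hb; split; first exact: inH_step.
  by exists (L_src r m e), [:: e]; split => //; case.
case=> [//|hY].
have [hn1 [hn2 hn3]] := edge_le he.
have [hrep|hnrep] := boolP (rep (L_src r m e)).
  apply: hG; case: (hY) => hH _; split => //; right; exact: norm.
case: hY => hH [w [p [hw hp hcl]]].
split; first exact: inH_step.
exists w, (p ++ [:: e]); split => //.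
  by apply: chain_cat hp _; apply: chain_single.
move=> l; rewrite size_cat /= addn1 ltnS => hl.
rewrite nth_cat.
have hl' : l < size p by lia.
rewrite hl'.
have [hl2|hl2] := ltnP l.+1 (size p); first exact: hcl.
have -> : l = (size p).-1 by lia.
by rewrite (chain_last _ hp).
Qed.

Lemma Dlem u p v : LP u p v -> G u \/ Y u -> Y v.
Proof.
rewrite /LP; elim: p u => [|e p IH] u //= [hv [hs hp]] hu.
have hy : Y (L_rng e) by apply: stepY => //; rewrite hs.
case: p hp IH => [|e' p] hp IH; first by rewrite -hp.
exact: (IH _ hp (or_intror hy)).
Qed.


Lemma walk a x N : a <= n -> x < r -> exists p, LP (a, x) p (a, (x + N.+1 * m a) %% r).
Proof.
move=> ha hx; elim: N => [|N [p hp]].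
  exists [:: (a, a, (x + 1 * m a) %% r)]; rewrite /LP /=; split.
    by rewrite leqnn ha ltn_pmod.
  by rewrite mul1n modK // modn_small.
exists (p ++ [:: (a, a, (x + N.+2 * m a) %% r)]); apply: chain_cat hp _.
rewrite /= ha leqnn ltn_pmod //; split => //; split => //.
have -> : x + N.+2 * m a = (x + N.+1 * m a) + m a by rewrite mulSn; lia.
by rewrite modK.
Qed.

Lemma main_sec i k : i <= n -> inS n r m i k -> BP (i, k).
Proof.
move=> hi [hk hH].
have G00 : G (0, 0).
  split => //; last by left.
    by rewrite /rep /g /= gcdn_gt0 hr orbT.
  by move=> X hX hb; apply: hb.
have Zb : forall l, l <= n -> G (l, 0) \/ Y (l, 0).
  case=> [|l] hl; first by left.
  right.
  have [p hp] := walk (a:=0) (x:=0) (r.*2).-2 (leq0n n) hr.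
  apply: (Dlem (p := p ++ [:: (0, l.+1, 0)])) (or_introl G00).
  apply: chain_cat hp _; rewrite /= hl hr; split => //; split => //.
  have e2 : ((r.*2).-2).+1 * m 0 + m 0 = r * (m 0).*2.
    have -> : ((r.*2).-2).+1 = (r.*2).-1 by lia.
    nia.
  have h0 : (r * (m 0).*2) %% r = 0 by rewrite modnMr.
  by rewrite -[X in (X + r - _)]h0 -e2 modK // add0n.
have Zh : hereditary n r m (fun v => G v \/ Y v).
  by move=> e he hs; right; apply: stepY.
have hz := hH _ Zh Zb.
have hrep : rep (i, k) by [].
case: hz => [[_ _ _ [hik|//]]|hY]; last exact: norm.
case: hik => -> ->.
have r00 : rep (0, 0) by case: G00.
apply: norm => //.
have [p hp] := walk (a:=0) (x:=0) r.-1 (leq0n n) hr.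
apply: (Dlem (p := p)) (or_introl G00).
by move: hp; rewrite prednK // add0n modnMr.
Qed.

End Main.

Unset Implicit Arguments.

Theorem lemma3p10 (n r : nat) (m : nat -> nat)
    (hn : 1 <= n) (hr : 1 <= r) (hm : forall i, i <= n -> 0 < m i)
    (i k : nat) (hi : i <= n) (hk : inS n r m i k) :
  exists p : seq Bedge,
    is_path (B_valid n r m) B_src B_rng (0, 0) (i, k) p.
Proof.
have [q hq] := main_sec hr hi hk.
by exists q; rewrite is_pathE.
Qed.
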